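(* The multiplicative extension of $B^-$ is a Hopf algebra epimorphism $B^-:\mathcal N_{\mathcal A}\twoheadrightarrow\mathcal H_{CK}$.
   Context: $\mathcal N_{\mathcal A}$ is the natural Hopf algebra of the operad of rooted trees. As an algebra it is the polynomial algebra on generators $t_{\tau(T)}$, one per isomorphism type of rooted tree, with the one-vertex tree equal to $1$. Its coproduct is multiplicative with $\Delta(t_{\tau(T)})=\sum_b t_{\tau(a_b(2))}\otimes t_{\tau(T_b(1))}$. The sum is over all colorings $b$ of the edges of $T$ by $\{1,2\}$ such that the edges of color $1$ form a subtree containing the root (possibly just the root). $T_b(1)$ is the rooted tree obtained by contracting each connected component of the color-$2$ edges (and each vertex not incident to any color-$2$ edge) to a single vertex, i.e. the tree of color-$1$ edges on these blocks. $a_b(2)$ is the forest of rooted trees formed by the color-$2$ components (with singleton trees contributing $1$). $\mathcal H_{CK}$ is the Connes–Kreimer Hopf algebra: the polynomial algebra on generators $t_{\tau(T)}$ for unlabelled rooted trees $T$, with the empty tree equal to $1$. Its coproduct is multiplicative with $\Delta_{CK}(t_{\tau(T)})=\sum_{b_v}t_{\tau(a_{b_v}(2))}\otimes t_{\tau(T_{b_v}(1))}$. The sum is over all colorings $b_v$ of the vertices of $T$ by $\{1,2\}$ such that the vertices of color $1$ induce a rooted subtree containing the root, or the empty set. $T_{b_v}(1)$ is that subtree, and $a_{b_v}(2)$ is the forest induced by the color-$2$ vertices, with $t$ of a forest the product over its trees. $B^-(t_{\tau(T)})=\prod_{j=1}^kt_{\tau(T_j)}$, where $T_1,\dots,T_k$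 are the subtrees of $T$ rooted at the children of the root. In particular, $B^-$ of the one-vertex tree is $1$. *)

(* Defs.v *)
From HB Require Import structures.
From mathcomp Require Import all_boot all_order all_algebra.
Set Implicit Arguments. Unset Strict Implicit. Unset Printing Implicit Defensive.
Import GRing.Theory.
Local Open Scope ring_scope.

(* Plane representatives of (nonempty) rooted trees: a root together   *)
(* with the list of subtrees rooted at its children.                   *)
Inductive rtree := Node of seq rtree.

Definition children (t : rtree) : seq rtree := let: Node ts := t in ts.

Fixpoint rtree_enc (t : rtree) : GenTree.tree unit :=
  let: Node ts := t in GenTree.Node 0 (map rtree_enc ts).
Fixpoint rtree_dec (g : GenTree.tree unit) : rtree :=
  match g with
  | GenTree.Leaf _ => Node [::]
  | GenTree.Node _ gs => Node (map rtree_dec gs)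
  end.
Lemma rtree_encK : cancel rtree_enc rtree_dec.
Proof.
rewrite /cancel; fix IH 1; case=> ts /=; congr Node; elim: ts => //= t ts IHts.
by rewrite IH IHts.
Qed.
HB.instance Definition _ := Countable.copy rtree (can_type rtree_encK).

(* Canonical representative of the isomorphism type tau(T) of a rooted  *)
(* tree: children canonicalised recursively and then sorted (by the     *)
(* injective code pickle).  canon T1 = canon T2 iff T1 ~= T2.           *)
Definition rtree_le (a b : rtree) : bool := (pickle a <= pickle b)%N.
Fixpoint canon (t : rtree) : rtree :=
  let: Node ts := t in Node (sort rtree_le (map canon ts)).

Definition is_leaf (t : rtree) : bool := nilp (children t).

(* Elements of the polynomial algebras are represented as formal finite *)
(* sums  sum_i c_i * t_{T_i1} ... t_{T_ik}, i.e. lists of (coefficient, *)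
(* monomial), a monomial being a list of trees (a forest).  Two formal  *)
(* sums denote the same element iff all their coefficients agree.       *)
Section Algebras.
Variable R : fieldType.

Definition fsum := seq (R * seq rtree).
Definition fsum2 := seq (R * (seq rtree * seq rtree)). (* tensor square *)

(* Keys of monomials.  In N_A the one-vertex tree equals 1, so it is     *)
(* discarded; in H_CK every tree is a generator (empty forest = 1).     *)
Definition keyN (m : seq rtree) : seq rtree := map canon (filter (fun t => ~~ is_leaf t) m).
Definition keyH (m : seq rtree) : seq rtree := map canon m.

Definition coefN (p : fsum) (m : seq rtree) : R :=
  \sum_(x <- p | perm_eq (keyN x.2) (keyN m)) x.1.
Definition coefH (p : fsum) (m : seq rtree) : R :=
  \sum_(x <- p | perm_eq (keyH x.2) (keyH m)) x.1.
Definition coefHH (P : fsum2) (m : seq rtree * seq rtree) : R :=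
  \sum_(x <- P | perm_eq (keyH x.2.1) (keyH m.1) && perm_eq (keyH x.2.2) (keyH m.2)) x.1.

Definition eqN (p q : fsum) : Prop := forall m, coefN p m = coefN q m.
Definition eqH (p q : fsum) : Prop := forall m, coefH p m = coefH q m.
Definition eqHH (P Q : fsum2) : Prop := forall m, coefHH P m = coefHH Q m.

Definition fmul (p q : fsum) : fsum := [seq (x.1 * y.1, x.2 ++ y.2) | x <- p, y <- q].
Definition fone : fsum := [:: (1, [::])].
Definition fmul2 (P Q : fsum2) : fsum2 :=
  [seq (x.1 * y.1, (x.2.1 ++ y.2.1, x.2.2 ++ y.2.2)) | x <- P, y <- Q].
Definition fone2 : fsum2 := [:: (1, ([::], [::]))].

Definition epsN (p : fsum) : R := \sum_(x <- p | nilp (keyN x.2)) x.1.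
Definition epsH (p : fsum) : R := \sum_(x <- p | nilp x.2) x.1.

Definition coprod_ext (gen : rtree -> fsum2) (p : fsum) : fsum2 :=
  flatten [seq [seq (x.1 * y.1, y.2) | y <- foldr (fun t acc => fmul2 (gen t) acc) fone2 x.2]
          | x <- p].
End Algebras.

(* Edge colourings of N_A.  For T = Node ts, each child edge is either  *)
(* of colour 2 (then, by the subtree condition, the whole child subtree *)
(* lies in the colour-2 component of the root) or of colour 1 (then the *)
(* child subtree carries an admissible colouring recursively).          *)
(* ecut T lists, for every admissible colouring b, the pair             *)
(* (forest a_b(2) as a list of trees, tree T_b(1)).                     *)
(* Accumulator: (colour-2 children of the root, colour-2 components     *)
(*  from colour-1 children, contracted trees of colour-1 children).     *)
Definition ecut_step (c : rtree) (cc : seq (seq rtree * rtree))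
    (acc : seq (seq rtree * seq rtree * seq rtree)) :=
  [seq (c :: a.1.1, a.1.2, a.2) | a <- acc] ++
  [seq (a.1.1, fr.1 ++ a.1.2, fr.2 :: a.2) | fr <- cc, a <- acc].

Fixpoint ecut (t : rtree) : seq (seq rtree * rtree) :=
  let: Node ts := t in
  [seq (Node a.1.1 :: a.1.2, Node a.2)
  | a <- foldr (fun p acc => ecut_step p.1 p.2 acc) [:: ([::], [::], [::])]
                [seq (c, ecut c) | c <- ts]].

(* Admissible vertex colourings for H_CK: either all vertices have      *)
(* colour 2 (forest T, empty subtree), or the root has colour 1 and each *)
(* child subtree carries an admissible colouring.  vcut T lists pairs    *)
(* (forest a_{b_v}(2), subtree T_{b_v}(1) or None when empty).          *)
Definition vcut_step (cc : seq (seq rtree * option rtree))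
    (acc : seq (seq rtree * seq rtree)) :=
  [seq (fr.1 ++ a.1, if fr.2 is Some r then r :: a.2 else a.2) | fr <- cc, a <- acc].

Fixpoint vcut (t : rtree) : seq (seq rtree * option rtree) :=
  let: Node ts := t in
  ([:: Node ts], None) ::
  [seq (a.1, Some (Node a.2))
  | a <- foldr (fun cc acc => vcut_step cc acc) [:: ([::], [::])]
                [seq vcut c | c <- ts]].

Section Maps.
Variable R : fieldType.

(* coproduct of N_A on generators: sum_b t_{a_b(2)} (x) t_{T_b(1)} *)
Definition DeltaN_gen (t : rtree) : fsum2 R :=
  [seq (1, (x.1, [:: x.2])) | x <- ecut t].
Definition DeltaH_gen (t : rtree) : fsum2 R :=
  [seq (1, (x.1, if x.2 is Some r then [:: r] else [::])) | x <- vcut t].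

Definition DeltaN : fsum R -> fsum2 R := coprod_ext DeltaN_gen.
Definition DeltaH : fsum R -> fsum2 R := coprod_ext DeltaH_gen.

Definition Bminus_mon (m : seq rtree) : seq rtree := flatten (map children m).
Definition Bminus (p : fsum R) : fsum R := [seq (x.1, Bminus_mon x.2) | x <- p].
Definition Bminus2 (P : fsum2 R) : fsum2 R :=
  [seq (x.1, (Bminus_mon x.2.1, Bminus_mon x.2.2)) | x <- P].
End Maps.

(* Main.v *)
Require Import Defs.
From HB Require Import structures.
From mathcomp Require Import all_boot all_order all_algebra.
Import GRing.Theory.
Local Open Scope ring_scope.

Section All2.
Variables (A B : Type).
Lemma all2_map2 C D (r : C -> D -> bool) (f : A -> C) (g : B -> D) s t :
  all2 r (map f s) (map g t) = all2 (fun x y => r (f x) (g y)) s t.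
Proof. by elim: s t => [|x s IH] [|y t] //=; rewrite IH. Qed.
Lemma all2_impl (r1 r2 : A -> B -> bool) s t :
  (forall x y, r1 x y -> r2 x y) -> all2 r1 s t -> all2 r2 s t.
Proof. move=> H; elim: s t => [|x s IH] [|y t] //= /andP[/H -> /IH] //. Qed.
Lemma all2_catP (r : A -> B -> bool) s1 s2 t1 t2 :
  all2 r s1 t1 -> all2 r s2 t2 -> all2 r (s1 ++ s2) (t1 ++ t2).
Proof. by elim: s1 t1 => [|x s IH] [|y t] //= /andP[-> /IH] H2 /H2. Qed.
Lemma all2_swap (r : A -> B -> bool) s t :
  all2 r s t = all2 (fun y x => r x y) t s.
Proof. by elim: s t => [|x s IH] [|y t] //=; rewrite IH. Qed.
End All2.
Lemma all2_allpairs A B C D (r1 : A -> B -> bool) (r2 : C -> D -> bool)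
  E F (r : E -> F -> bool) (f : A -> C -> E) (g : B -> D -> F) s s' t t' :
  all2 r1 s s' -> all2 r2 t t' ->
  (forall x x' y y', r1 x x' -> r2 y y' -> r (f x y) (g x' y')) ->
  all2 r [seq f x y | x <- s, y <- t] [seq g x y | x <- s', y <- t'].
Proof.
move=> + Ht H; elim: s s' => [|x s IH] [|x' s'] //= /andP[Hx /IH Hs].
apply: all2_catP => //; rewrite all2_map2; apply: all2_impl Ht => y y'; exact: H.
Qed.
Lemma all2_flatten A B (r : A -> B -> bool) S T :
  all2 (fun s t => all2 r s t) S T -> all2 r (flatten S) (flatten T).
Proof. elim: S T => [|x s IH] [|y t] //= /andP[H /IH]; exact: all2_catP. Qed.

Definition keq (a b : seq rtree) := perm_eq (keyH a) (keyH b).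
Definition Bm := Bminus_mon.

Lemma Bm_cons t m : Bm (t :: m) = children t ++ Bm m. Proof. by []. Qed.
Lemma Bm_cat a b : Bm (a ++ b) = Bm a ++ Bm b.
Proof. by rewrite /Bm /Bminus_mon map_cat flatten_cat. Qed.
Lemma keyH_cat a b : keyH (a ++ b) = keyH a ++ keyH b.
Proof. by rewrite /keyH map_cat. Qed.

Lemma le_total : total rtree_le. Proof. by move=> a b; apply: leq_total. Qed.
Lemma le_trans : transitive rtree_le. Proof. by move=> a b c; apply: leq_trans. Qed.
Lemma le_anti : antisymmetric rtree_le.
Proof. by move=> a b /anti_leq/(pcan_inj (@pickleK _)). Qed.

Definition Fe (ts : seq rtree) :=
  foldr (fun p acc => ecut_step p.1 p.2 acc) [:: ([::], [::], [::])]
                [seq (c, ecut c) | c <- ts].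
Definition Hv (ts : seq rtree) :=
  foldr (fun cc acc => vcut_step cc acc) [:: ([::], [::])] [seq vcut c | c <- ts].

Lemma ecutE ts : ecut (Node ts) = [seq (Node a.1.1 :: a.1.2, Node a.2) | a <- Fe ts].
Proof. by []. Qed.
Lemma vcutE ts : vcut (Node ts) = ([:: Node ts], None) :: [seq (a.1, Some (Node a.2)) | a <- Hv ts].
Proof. by []. Qed.

Lemma FeS c ts : Fe (c :: ts) = ecut_step c (ecut c) (Fe ts). Proof. by []. Qed.
Lemma HvS c ts : Hv (c :: ts) = vcut_step (vcut c) (Hv ts). Proof. by []. Qed.
Definition Rel (a : seq rtree * seq rtree * seq rtree) (b : seq rtree * seq rtree) :=
  keq (a.1.1 ++ Bm a.1.2) b.1 && keq a.2 b.2.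

Lemma canon_keq a b : keq a b -> canon (Node a) = canon (Node b).
Proof.
by move=> H /=; congr Node; apply/perm_sortP => //; [exact: le_total|exact: le_trans|exact: le_anti].
Qed.

Definition R1 (fr : seq rtree * rtree) (fr' : seq rtree * option rtree) :=
   keq (Bm fr.1) fr'.1 && (if fr'.2 is Some r then canon fr.2 == canon r else false).
Arguments canon_keq {a b}.
Lemma main_comb t : all2 Rel (Fe (children t)) (Hv (children t)).
Proof.
move: t; fix IH 1; case=> ts; elim: ts => [|c ts IHts] /=.
  by [].
have IHc := IH c.
rewrite FeS HvS /ecut_step /vcut_step.
case: c IHc => cs IHc; rewrite ecutE vcutE /=.
apply: all2_catP.
  rewrite all2_map2; apply: all2_impl IHts => a b /andP[H1 H2].
  move: H1 H2; rewrite /Rel /keq /= perm_cons => -> ->.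
  by [].
eapply (@all2_allpairs _ _ _ _ R1 Rel); [|exact: IHts|].
- rewrite all2_map2; apply: all2_impl IHc => a b /andP[H1 H2] /=.
  rewrite /R1 Bm_cons /= H1 /=.
  apply/eqP; exact: (canon_keq H2).
- move=> [f1 f2] [g1 g2] [[a1 a2] a3] [b1 b2]; rewrite /R1 /= => /andP[H1].
  case: g2 => [g2|] // /eqP H2 /andP[H3 H4].
  move: H3 H4; rewrite /Rel /= /keq /= H2 perm_cons => H3 ->; rewrite andbT.
  rewrite Bm_cat !keyH_cat perm_catCA perm_cat //.
  by rewrite -keyH_cat.
Qed.

Section Coprod.
Variable R : fieldType.
Definition rel2 (x y : R * (seq rtree * seq rtree)) :=
  (x.1 == y.1) && keq x.2.1 y.2.1 && keq x.2.2 y.2.2.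

Lemma all2_eqHH (P Q : fsum2 R) : all2 rel2 P Q -> eqHH P Q.
Proof.
rewrite /eqHH /coefHH; elim: P Q => [|x P IH] [|y Q'] //= H0 m; move: H0 => /andP[/andP[/andP[/eqP e1 k1] k2] /IH H].
move: (H m) => {}H.
rewrite !big_cons e1; move: k1 k2; rewrite /keq => k1 k2; by rewrite (permPl k1) (permPl k2) H.
Qed.

Definition GH m := foldr (fun t acc => fmul2 (DeltaH_gen R t) acc) (fone2 R) m.
Definition GN m := foldr (fun t acc => fmul2 (DeltaN_gen R t) acc) (fone2 R) m.

Lemma fmul2_1l (P : fsum2 R) : fmul2 (fone2 R) P = P.
Proof. by rewrite /fmul2 /= cats0; elim: P => //= [[c [a b]] P ->]; rewrite mul1r. Qed.

Lemma fmul2A (P Q S : fsum2 R) : fmul2 (fmul2 P Q) S = fmul2 P (fmul2 Q S).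
Proof.
rewrite /fmul2; elim: P => //= x P IH; rewrite allpairs_cat IH; congr (_ ++ _); clear IH.
elim: Q => //= y Q IHQ; rewrite map_cat IHQ -map_comp; congr (_ ++ _).
by apply: eq_map => z /=; rewrite mulrA !catA.
Qed.

Lemma GH_cat a b : GH (a ++ b) = fmul2 (GH a) (GH b).
Proof. by elim: a => /= [|t a ->]; rewrite ?fmul2_1l ?fmul2A. Qed.

Lemma Bminus2_fmul2 (P Q : fsum2 R) :
  Bminus2 (fmul2 P Q) = fmul2 (Bminus2 P) (Bminus2 Q).
Proof.
rewrite /Bminus2 /fmul2; elim: P => //= x P IH; rewrite map_cat IH; congr (_ ++ _).
by rewrite -!map_comp; apply: eq_map => y /=; rewrite -!/(Bm _) !Bm_cat.
Qed.

Lemma GH_H ts : GH ts = [seq (1, h) | h <- Hv ts].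
Proof.
elim: ts => //= c ts IH; rewrite IH -/(GH ts) /= HvS /vcut_step /fmul2 /DeltaH_gen.
elim: (vcut c) => //= x s ->; rewrite map_cat; congr (_ ++ _).
rewrite -!map_comp; apply: eq_map => y /=; rewrite mulr1; by case: x.2.
Qed.

Lemma gen_lemma t : all2 rel2 (GH (children t)) (Bminus2 (DeltaN_gen R t)).
Proof.
rewrite GH_H /Bminus2 /DeltaN_gen; case: t => ts; rewrite ecutE -!map_comp /=.
rewrite all2_map2 all2_swap; apply: all2_impl (main_comb (Node ts)) => a b /andP[H1 H2].
rewrite /rel2 /= eqxx /= -!/(Bm _) !Bm_cons /=.
have -> : Bm [::] = [::] by []. rewrite cats0.
by move: H1 H2; rewrite /keq => H1 H2; rewrite perm_sym H1 perm_sym H2.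
Qed.
End Coprod.

Section Main.
Variable R : fieldType.

Lemma mon m : all2 (@rel2 R) (GH R (Bm m)) (Bminus2 (GN R m)).
Proof.
elim: m => [|t m IH]; first by rewrite /= /rel2 /keq /= eqxx.
rewrite Bm_cons GH_cat /= Bminus2_fmul2 /fmul2.
eapply all2_allpairs; [exact: gen_lemma|exact: IH|].
move=> x x' y y' /andP[/andP[/eqP e1 k1] k2] /andP[/andP[/eqP e2 k3] k4].
move: k1 k2 k3 k4; rewrite /rel2 /keq /= e1 e2 eqxx !keyH_cat => k1 k2 k3 k4.
by rewrite (perm_cat k1 k3) (perm_cat k2 k4).
Qed.

Lemma coprod (p : fsum R) : eqHH (DeltaH (Bminus p)) (Bminus2 (DeltaN p)).
Proof.
apply: all2_eqHH; rewrite /DeltaH /DeltaN /coprod_ext /Bminus /Bminus2 map_flatten -!map_comp.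
apply: all2_flatten; rewrite all2_map2; elim: p => //= x p ->; rewrite andbT.
have := mon x.2; rewrite /Bminus2 -map_comp !all2_map2 -[GH R _]map_id all2_map2.
apply: all2_impl => y y' /andP[/andP[/eqP e1 k1] k2].
by rewrite /rel2 /= e1 eqxx k1 k2.
Qed.

Lemma Bminus_fmul (p q : fsum R) : Bminus (fmul p q) = fmul (Bminus p) (Bminus q).
Proof.
rewrite /Bminus /fmul; elim: p => //= x p IH; rewrite map_cat IH; congr (_ ++ _).
by rewrite -!map_comp; apply: eq_map => y /=; rewrite -!/(Bm _) Bm_cat.
Qed.

Lemma nilp_Bm m : nilp (Bm m) = nilp (keyN m).
Proof.
elim: m => //= t m IH; rewrite Bm_cons /nilp size_cat addn_eq0.
move: IH; rewrite /nilp => ->; rewrite /keyN; by case: t => [[|c cs]].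
Qed.

Lemma eps (p : fsum R) : epsH (Bminus p) = epsN p.
Proof. by rewrite /epsH /epsN /Bminus big_map; apply: eq_bigl => x; rewrite /= -/(Bm _) nilp_Bm. Qed.

Lemma surj (q : fsum R) : exists p : fsum R, eqH (Bminus p) q.
Proof.
exists [seq (x.1, [:: Node x.2]) | x <- q]; have -> // : Bminus [seq (x.1, [:: Node x.2]) | x <- q] = q.
rewrite /Bminus -map_comp; elim: q => //= x q ->; case: x => a b /=.
by rewrite /Bminus_mon /= cats0.
Qed.
End Main.

Definition gN (m : seq rtree) := sort rtree_le (keyN m).

Lemma permN_g a b : perm_eq (keyN a) (keyN b) = (gN a == gN b).
Proof.
exact: (sameP (perm_sortP le_total le_trans le_anti _ _) eqP).
Qed.

Lemma keyH_Bm a : perm_eq (keyH (Bm a)) (flatten (map children (keyN a))).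
Proof.
elim: a => //= t a IH; rewrite Bm_cons keyH_cat /keyN /=.
case: t => [cs] /=; case: cs => [|c cs] //=.
rewrite -cat_cons; apply: perm_cat; last exact: IH.
by rewrite perm_sym perm_sort.
Qed.

Lemma Bm_inv a b : perm_eq (keyN a) (keyN b) -> keq (Bm a) (Bm b).
Proof.
move=> H; rewrite /keq (permPl (keyH_Bm a)) perm_sym (permPl (keyH_Bm b)) perm_sym.
by apply: perm_flatten; apply: perm_map.
Qed.

Lemma sum_const_pred1 (R : fieldType) (K : seq (seq rtree)) a (c : R) :
  uniq K -> a \in K -> \sum_(k <- K | k == a) c = c.
Proof.
move=> U Ha; rewrite big_const_seq.
have -> : count (fun k => k == a) K = 1%N by rewrite (count_uniq_mem a U) Ha.
by rewrite /= addr0.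
Qed.

Lemma sum_inv (R : fieldType) (p q : fsum R) (Q : seq rtree -> bool) :
  (forall a b, gN a = gN b -> Q a = Q b) -> eqN p q ->
  \sum_(x <- p | Q x.2) x.1 = \sum_(x <- q | Q x.2) x.1.
Proof.
move=> Qinv Heq.
set s := map snd (p ++ q).
set K := undup (map gN s).
pose rp k := nth [::] s (index k (map gN s)).
have grep k : k \in map gN s -> gN (rp k) = k.
  move=> Hk; rewrite /rp -(nth_map [::] [::]) ?nth_index //.
  by rewrite -(size_map gN) index_mem.
have spl (r : fsum R) : {subset map snd r <= s} ->
    \sum_(x <- r | Q x.2) x.1 = \sum_(k <- K | Q (rp k)) Defs.coefN r (rp k).
  move=> Hr.
  rewrite [RHS]big_seq_cond.
  have cN k : k \in map gN s -> Defs.coefN r (rp k) = \sum_(x <- r) (if gN x.2 == k then x.1 else 0).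
    by move=> Hk; rewrite /Defs.coefN big_mkcond; apply: eq_bigr => x _; rewrite permN_g grep.
  under eq_bigr => k /andP[Hk _].
    rewrite mem_undup in Hk; rewrite (cN k Hk).
  over.
  rewrite exchange_big /= big_mkcond /=.
  apply: eq_big_seq => x xr.
  rewrite -big_mkcondr.
  have Hin : gN x.2 \in map gN s by apply: map_f; apply: Hr; apply: map_f.
  have Qe k : gN x.2 = k -> Q (rp k) = Q x.2.
    by move=> e; apply: Qinv; rewrite grep -e.
  case Qx: (Q x.2).
    rewrite (eq_bigl (fun k => k == gN x.2)); last first.
      move=> k /=; rewrite [RHS]eq_sym; case: (gN x.2 =P k) => [e|_] /=; last by rewrite andbF.
      by rewrite andbT (Qe _ e) Qx -e mem_undup Hin.
    by symmetry; apply: sum_const_pred1; [exact: undup_uniq|rewrite mem_undup].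
  rewrite big_pred0 // => k; case: (gN x.2 =P k) => [e|_] /=; last by rewrite andbF.
  by rewrite (Qe _ e) Qx andbF.
have Hp : {subset map snd p <= s} by move=> y Hy; rewrite /s map_cat mem_cat Hy.
have Hq : {subset map snd q <= s} by move=> y Hy; rewrite /s map_cat mem_cat Hy orbT.
rewrite (spl p Hp) (spl q Hq); apply: eq_bigr => k _; exact: Heq.
Qed.

Lemma welldef (R : fieldType) (p q : fsum R) : eqN p q -> eqH (Bminus p) (Bminus q).
Proof.
move=> H m; rewrite /coefH /Bminus !big_map /=.
apply: (@sum_inv R p q (fun m0 => perm_eq (keyH (Bm m0)) (keyH m))) => // a b e /=.
have : keq (Bm a) (Bm b) by apply: Bm_inv; rewrite permN_g e.
by rewrite /keq => /permPl ->.
Qed.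

Theorem mainTheorem12 (R : fieldType) :
  (* well defined on N_A *)
  (forall p q : fsum R, eqN p q -> eqH (Bminus p) (Bminus q)) /\
  (* algebra morphism *)
  (forall p q : fsum R, eqH (Bminus (fmul p q)) (fmul (Bminus p) (Bminus q))) /\
  eqH (Bminus (fone R)) (fone R) /\
  (* coalgebra morphism *)
  (forall p : fsum R, eqHH (DeltaH (Bminus p)) (Bminus2 (DeltaN p))) /\
  (forall p : fsum R, epsH (Bminus p) = epsN p) /\
  (* surjective *)
  (forall q : fsum R, exists p : fsum R, eqH (Bminus p) q).
Proof.
split; first exact: welldef.
split; first by move=> p q m; rewrite Bminus_fmul.
split; first by [].
split; first exact: coprod.
split; first exact: eps.
exact: surj.
Qed.
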